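(* Let $i:\mathbb{A}\to\mathbb{B}$ be a virtual double functor which is fully faithful, injective on objects, and injective on loose arrows. Then $i$ is the equalizer of its cokernel pair $q_1,q_2:\mathbb{B}\rightrightarrows\mathbb{B}\cup_{\mathbb{A}}\mathbb{B}$; in particular $i$ is a regular monomorphism.
   Context: A virtual double category (VDC) has objects, tight arrows forming a category, loose arrows, and $n$-ary multicells from a composable path of $n$ loose arrows to a loose arrow with two tight sides, with identities and associative unital composition; a virtual double functor (VDF) preserves all structure strictly, and the category of VDCs and VDFs is cocomplete. A VDF $i:\mathbb{A}\to\mathbb{B}$ is fully faithful if it is fully faithful on underlying tight categories and, for every path $\varphi$ of loose arrows and loose arrow $\psi$ of $\mathbb{A}$, the induced map from multicells of $\mathbb{A}$ with loose source $\varphi$ and target $\psi$ to multicells of $\mathbb{B}$ with loose source $i(\varphi)$ and target $i(\psi)$ is a bijection. The cokernel pair is the pair of coprojections of the pushout $\mathbb{B}\cup_{\mathbb{A}}\mathbb{B}$ of $i$ along itself. *)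

(* Defs.v *)
(* Virtual double categories, presented "unityped": one carrier per sort
   (objects, tight arrows, loose arrows, multicells) with boundary maps and
   total operations; the VDC axioms and the preservation conditions of
   virtual double functors are only imposed on composable inputs. *)
From mathcomp Require Import all_boot.
Set Implicit Arguments. Unset Strict Implicit. Unset Printing Implicit Defensive.

Record vdc_data := VdcData {
  vob : Type;
  vth : Type;
  vlo : Type;
  vce : Type;
  tdom : vth -> vob; tcod : vth -> vob;
  tid : vob -> vth;
  tcomp : vth -> vth -> vth;        (* tcomp g f = g o f (meaningful if tcod f = tdom g) *)
  ldom : vlo -> vob; lcod : vlo -> vob;
  cleft : vce -> vth; cright : vce -> vth;
  csrc : vce -> seq vlo;
  ctgt : vce -> vlo;
  cid : vlo -> vce;
  (* ccomp a (k, bs): composite of a with the path of cells bs (a path in the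
     graph whose vertices are tight arrows and whose edges are cells), starting
     at the vertex k (k matters only when bs is empty, i.e. for whiskering a
     nullary piece by a tight arrow). *)
  ccomp : vce -> vth * seq vce -> vce }.

Arguments tdom {v} _. Arguments tcod {v} _. Arguments tid {v} _.
Arguments tcomp {v} _ _. Arguments ldom {v} _. Arguments lcod {v} _.
Arguments cleft {v} _. Arguments cright {v} _. Arguments csrc {v} _.
Arguments ctgt {v} _. Arguments cid {v} _. Arguments ccomp {v} _ _.

Section Paths.
Variable C : vdc_data.

Fixpoint lpath (x : vob C) (ps : seq (vlo C)) (y : vob C) : Prop :=
  match ps with
  | [::] => x = y
  | p :: ps' => ldom p = x /\ lpath (lcod p) ps' y
  end.

Definition is_lpath (x : vob C) (ps : seq (vlo C)) : Prop := exists y, lpath x ps y.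

Fixpoint cadj (bs : seq (vce C)) : Prop :=
  match bs with
  | b1 :: ((b2 :: _) as bs') => cright b1 = cleft b2 /\ cadj bs'
  | _ => True
  end.

Definition cpath_ok (kb : vth C * seq (vce C)) : Prop :=
  (match kb.2 with [::] => True | b :: _ => cleft b = kb.1 end) /\ cadj kb.2.

Definition cpath_end (kb : vth C * seq (vce C)) : vth C :=
  last kb.1 (map cright kb.2).

Definition composable (a : vce C) (kb : vth C * seq (vce C)) : Prop :=
  [/\ cpath_ok kb, tcod kb.1 = tdom (cleft a) & map ctgt kb.2 = csrc a].

Definition comp_left (a : vce C) (kb : vth C * seq (vce C)) : vth C :=
  tcomp (cleft a) kb.1.
Definition comp_right (a : vce C) (kb : vth C * seq (vce C)) : vth C :=
  tcomp (cright a) (cpath_end kb).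

Fixpoint split_cp (sh : seq nat) (m : vth C) (gs : seq (vce C))
  : seq (vth C * seq (vce C)) :=
  match sh with
  | [::] => [::]
  | n :: sh' => (m, take n gs) :: split_cp sh' (cpath_end (m, take n gs)) (drop n gs)
  end.

Record is_vdc : Prop := {
  tid_dom : forall x : vob C, tdom (tid x) = x;
  tid_cod : forall x : vob C, tcod (tid x) = x;
  tcomp_dom : forall f g : vth C, tcod f = tdom g -> tdom (tcomp g f) = tdom f;
  tcomp_cod : forall f g : vth C, tcod f = tdom g -> tcod (tcomp g f) = tcod g;
  tcomp_id_r : forall f : vth C, tcomp f (tid (tdom f)) = f;
  tcomp_id_l : forall f : vth C, tcomp (tid (tcod f)) f = f;
  tcomp_assoc : forall f g h : vth C, tcod f = tdom g -> tcod g = tdom h ->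
      tcomp h (tcomp g f) = tcomp (tcomp h g) f;
  cell_src : forall c : vce C, lpath (tdom (cleft c)) (csrc c) (tdom (cright c));
  cell_left : forall c : vce C, tcod (cleft c) = ldom (ctgt c);
  cell_right : forall c : vce C, tcod (cright c) = lcod (ctgt c);
  cid_src : forall p : vlo C, csrc (cid p) = [:: p];
  cid_tgt : forall p : vlo C, ctgt (cid p) = p;
  cid_left : forall p : vlo C, cleft (cid p) = tid (ldom p);
  cid_right : forall p : vlo C, cright (cid p) = tid (lcod p);
  ccomp_src : forall a kb, composable a kb -> csrc (ccomp a kb) = flatten (map csrc kb.2);
  ccomp_tgt : forall a kb, composable a kb -> ctgt (ccomp a kb) = ctgt a;
  ccomp_left : forall a kb, composable a kb -> cleft (ccomp a kb) = comp_left a kb;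
  ccomp_right : forall a kb, composable a kb -> cright (ccomp a kb) = comp_right a kb;
  ccomp_id_r : forall a : vce C, ccomp a (tid (tdom (cleft a)), map cid (csrc a)) = a;
  ccomp_id_l : forall b : vce C, ccomp (cid (ctgt b)) (cleft b, [:: b]) = b;
  ccomp_assoc : forall a kb mg, composable a kb -> composable (ccomp a kb) mg ->
      ccomp (ccomp a kb) mg =
      ccomp a (tcomp kb.1 mg.1,
               [seq ccomp bp.1 bp.2 |
                 bp <- zip kb.2 (split_cp [seq size (csrc b) | b <- kb.2] mg.1 mg.2)])
}.

End Paths.

Record vdc := Vdc { vdata :> vdc_data; vdc_axioms : is_vdc vdata }.

Section Functors.
Variables A B : vdc_data.

Record is_vdf (fo : vob A -> vob B) (ft : vth A -> vth B) (fl : vlo A -> vlo B)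
    (fc : vce A -> vce B) : Prop := {
  ft_dom : forall f, tdom (ft f) = fo (tdom f);
  ft_cod : forall f, tcod (ft f) = fo (tcod f);
  ft_id : forall x, ft (tid x) = tid (fo x);
  ft_comp : forall f g, tcod f = tdom g -> ft (tcomp g f) = tcomp (ft g) (ft f);
  fl_dom : forall p, ldom (fl p) = fo (ldom p);
  fl_cod : forall p, lcod (fl p) = fo (lcod p);
  fc_left : forall c, cleft (fc c) = ft (cleft c);
  fc_right : forall c, cright (fc c) = ft (cright c);
  fc_src : forall c, csrc (fc c) = map fl (csrc c);
  fc_tgt : forall c, ctgt (fc c) = fl (ctgt c);
  fc_id : forall p, fc (cid p) = cid (fl p);
  fc_comp : forall a kb, composable a kb ->
      fc (ccomp a kb) = ccomp (fc a) (ft kb.1, map fc kb.2)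
}.
End Functors.

Record vdf (A B : vdc) := Vdf {
  fo : vob A -> vob B; ft : vth A -> vth B; fl : vlo A -> vlo B; fc : vce A -> vce B;
  vdf_axioms : is_vdf fo ft fl fc }.

Definition vdf_eq (A B : vdc) (F G : vdf A B) : Prop :=
  [/\ forall x, fo F x = fo G x, forall f, ft F f = ft G f,
      forall p, fl F p = fl G p & forall c, fc F c = fc G c].

Definition comp_eq (A B B' D : vdc) (F : vdf A B) (G : vdf B D)
    (F' : vdf A B') (G' : vdf B' D) : Prop :=
  [/\ forall x, fo G (fo F x) = fo G' (fo F' x),
      forall f, ft G (ft F f) = ft G' (ft F' f),
      forall p, fl G (fl F p) = fl G' (fl F' p)
    & forall c, fc G (fc F c) = fc G' (fc F' c)].

Definition comp_eq1 (A B D : vdc) (F : vdf A B) (G : vdf B D) (H : vdf A D) : Prop :=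
  [/\ forall x, fo G (fo F x) = fo H x,
      forall f, ft G (ft F f) = ft H f,
      forall p, fl G (fl F p) = fl H p
    & forall c, fc G (fc F c) = fc H c].

Definition fully_faithful (A B : vdc) (i : vdf A B) : Prop :=
  [/\
      (forall f g : vth A, tdom f = tdom g -> tcod f = tcod g -> ft i f = ft i g -> f = g),
      (forall (x y : vob A) (h : vth B), tdom h = fo i x -> tcod h = fo i y ->
          exists f : vth A, [/\ tdom f = x, tcod f = y & ft i f = h]),
      (forall (x : vob A) (ps : seq (vlo A)) (q : vlo A) (c c' : vce A),
          is_lpath x ps ->
          tdom (cleft c) = x -> csrc c = ps -> ctgt c = q ->
          tdom (cleft c') = x -> csrc c' = ps -> ctgt c' = q ->
          fc i c = fc i c' -> c = c')
    &
      (forall (x : vob A) (ps : seq (vlo A)) (q : vlo A) (d : vce B),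
          is_lpath x ps ->
          tdom (cleft d) = fo i x -> csrc d = map (fl i) ps -> ctgt d = fl i q ->
          exists c : vce A, [/\ tdom (cleft c) = x, csrc c = ps, ctgt c = q & fc i c = d])].

Definition is_cokernel_pair (A B P : vdc) (i : vdf A B) (q1 q2 : vdf B P) : Prop :=
  comp_eq i q1 i q2 /\
  forall (X : vdc) (f1 f2 : vdf B X), comp_eq i f1 i f2 ->
    (exists u : vdf P X, comp_eq1 q1 u f1 /\ comp_eq1 q2 u f2) /\
    (forall u v : vdf P X, comp_eq1 q1 u f1 -> comp_eq1 q2 u f2 ->
                           comp_eq1 q1 v f1 -> comp_eq1 q2 v f2 -> vdf_eq u v).

Definition is_equalizer (A B P : vdc) (i : vdf A B) (q1 q2 : vdf B P) : Prop :=
  comp_eq i q1 i q2 /\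
  forall (X : vdc) (f : vdf X B), comp_eq f q1 f q2 ->
    (exists g : vdf X A, comp_eq1 g i f) /\
    (forall g h : vdf X A, comp_eq1 g i f -> comp_eq1 h i f -> vdf_eq g h).

(* Main.v *)
Require Import Defs.
From mathcomp Require Import all_boot.
From Stdlib Require Import ClassicalDescription IndefiniteDescription.
Set Implicit Arguments. Unset Strict Implicit. Unset Printing Implicit Defensive.

Definition Ylo := ((bool * bool) * bool)%type.
Fixpoint ispath (x : bool) (s : seq Ylo) : bool :=
  match s with [::] => true | p :: s' => (p.1.1 == x) && ispath p.1.2 s' end.
Definition pend (x : bool) (s : seq Ylo) : bool := last x (map (fun p => p.1.2) s).
Definition Yraw := ((bool * seq Ylo) * Ylo)%type.
Definition Ycell := {c : Yraw | ispath c.1.1 c.1.2}.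

Definition Ycid (p : Ylo) : Ycell.
  exists ((p.1.1, [:: p]), p); by rewrite /= eqxx.
Defined.

Definition Ydata : vdc_data :=
  @VdcData bool (bool * bool)%type Ylo Ycell
    (fun f => f.1) (fun f => f.2) (fun x => (x, x)) (fun g f => (f.1, g.2))
    (fun p => p.1.1) (fun p => p.1.2)
    (fun c => ((val c).1.1, (val c).2.1.1))
    (fun c => (pend (val c).1.1 (val c).1.2, (val c).2.1.2))
    (fun c => (val c).1.2) (fun c => (val c).2)
    Ycid
    (fun a kb => insubd a ((kb.1.1, flatten (map (fun b : Ycell => (val b).1.2) kb.2)), (val a).2)).

Lemma ispath_cat x s t : ispath x (s ++ t) = ispath x s && ispath (pend x s) t.
Proof. by elim: s x => [|p s IH] x //=; rewrite IH andbA. Qed.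
Lemma pend_cat x s t : pend x (s ++ t) = pend (pend x s) t.
Proof. by rewrite /pend map_cat last_cat. Qed.
Lemma pend_cons x p s : pend x (p :: s) = pend p.1.2 s.
Proof. by []. Qed.

Lemma lpathY x s y : lpath (C:=Ydata) x s y <-> ispath x s /\ pend x s = y.
Proof.
elim: s x => [|p s IH] x /=; first by split=> [->|[]].
rewrite IH; split.
  by move=> [-> [H1 H2]]; rewrite eqxx.
by move=> [/andP[/eqP -> H1] H2].
Qed.

Lemma valY (c : vce Ydata) : ispath (val c).1.1 (val c).1.2.
Proof. exact: valP c. Qed.

Lemma cpath_okY (k : vth Ydata) (bs : seq (vce Ydata)) :
  cpath_ok (C:=Ydata) (k, bs) ->
  ispath k.1 (flatten (map (fun b : Ycell => (val b).1.2) bs)) /\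
  pend k.1 (flatten (map (fun b : Ycell => (val b).1.2) bs)) = (cpath_end (C:=Ydata) (k, bs)).1.
Proof.
elim: bs k => [|b bs IH] k /=; first by [].
rewrite /cpath_ok /=; move=> [Hh Ha].
have Hx : (val b).1.1 = k.1 by rewrite -Hh.
have Hok : cpath_ok (C:=Ydata) (cright b, bs).
  split; last by case: bs Ha {IH} => [|b2 bs2] //= [].
  by case: bs Ha {IH} => [|b2 bs2] //= [].
have [IH1 IH2] := IH _ Hok.
rewrite ispath_cat pend_cat -Hx valY /=.
rewrite /cpath_end /= in IH2 *.
by split.
Qed.

Section Gen.
Variable C : vdc_data.
Lemma cadj_cons (g : vce C) l : cadj (g :: l) <-> cpath_ok (cright g, l).
Proof. rewrite /cpath_ok /=; case: l => [|g2 l] /=; first by []. by split=> -[? ?]. Qed.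
Lemma cpath_ok_cons (m : vth C) g l : cpath_ok (m, g :: l) <-> cleft g = m /\ cpath_ok (cright g, l).
Proof. rewrite -cadj_cons /cpath_ok /=. by []. Qed.
Lemma cpath_end_cons (m : vth C) g l : cpath_end (m, g :: l) = cpath_end (cright g, l).
Proof. by []. Qed.
Lemma cpath_ok_td (m : vth C) gs n : cpath_ok (m, gs) ->
  cpath_ok (m, take n gs) /\ cpath_ok (cpath_end (m, take n gs), drop n gs).
Proof.
elim: gs m n => [|g gs IH] m n; first by rewrite /cpath_ok /=.
case: n => [|n]; first by rewrite take0 drop0 /cpath_ok /=.
rewrite /= !cpath_ok_cons cpath_end_cons => -[Hg Hok].
by have [H1 H2] := IH _ n Hok.
Qed.
End Gen.

Lemma Yccomp_val (a : vce Ydata) kb : cpath_ok kb ->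
  val (ccomp a kb) = ((kb.1.1, flatten (map (fun b : Ycell => (val b).1.2) kb.2)), (val a).2).
Proof.
case: kb => k bs Hok; have [H1 _] := cpath_okY Hok.
by rewrite /= insubdK.
Qed.

Lemma assoc_src (bs : seq (vce Ydata)) m gs : cpath_ok (m, gs) ->
  flatten (map (fun c : vce Ydata => csrc c)
    [seq ccomp bp.1 bp.2 | bp <- zip bs (split_cp [seq size (csrc b) | b <- bs] m gs)])
  = flatten (map (fun c : vce Ydata => csrc c) (take (sumn [seq size (csrc b) | b <- bs]) gs)).
Proof.
elim: bs m gs => [|b bs IH] m gs Hok; first by rewrite take0.
have [H1 H2] := cpath_ok_td (size (csrc b)) Hok.
rewrite /= takeD map_cat flatten_cat -(IH _ _ H2).
by congr (_ ++ _); move: (Yccomp_val b H1) => /= ->.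
Qed.

Lemma Yccomp_val' (a : vce Ydata) kb :
  ispath kb.1.1 (flatten (map (fun b : Ycell => (val b).1.2) kb.2)) ->
  val (ccomp a kb) = ((kb.1.1, flatten (map (fun b : Ycell => (val b).1.2) kb.2)), (val a).2).
Proof. by case: kb => k bs H; rewrite /= insubdK. Qed.

Lemma Ycomp_src (a : vce Ydata) kb : composable a kb ->
  csrc (ccomp a kb) = flatten (map csrc kb.2).
Proof. by case=> H _ _; rewrite /csrc /= Yccomp_val. Qed.

Lemma Yis_vdc : is_vdc Ydata.
Proof.
split.
- by [].
- by [].
- by [].
- by [].
- by case.
- by case.
- by [].
- move=> c; apply/lpathY; split; [exact: valY | by []].
- by [].
- by [].
- by [].
- by [].
- by [].
- by [].
- exact: Ycomp_src.
- by move=> a kb [H _ _]; rewrite /ctgt /= Yccomp_val.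
- by move=> a kb [H _ _]; rewrite /cleft /= Yccomp_val.
- move=> a kb [H _ _]; rewrite /cright /= Yccomp_val //.
  by have [_ ->] := cpath_okY H.
- move=> [[[x s] p] H]; apply: val_inj.
  have E : flatten [seq (val b).1.2 | b <- [seq Ycid i | i <- s]] = s.
    by elim: s {H} => [|q s IH] //=; rewrite IH.
  by rewrite Yccomp_val' /= E.
- move=> [[[x s] p] H]; apply: val_inj.
  by rewrite Yccomp_val' /= cats0.
- move=> a kb mg Ha Hb; apply: val_inj.
  have [Hm _ Hmt] := Hb; have [Hk _ _] := Ha.
  have [Hp _] := cpath_okY Hm.
  have Hsz : size mg.2 <= sumn [seq size (csrc b) | b <- kb.2].
    rewrite -(size_map ctgt) Hmt Ycomp_src // size_flatten /shape -map_comp.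
    by [].
  have E := assoc_src kb.2 Hm; rewrite take_oversize // in E.
  rewrite (Yccomp_val (ccomp a kb) Hm) (Yccomp_val a Hk) Yccomp_val'.
    cbn [fst snd csrc ccomp tcomp Ydata] in E; cbn [fst snd csrc ccomp tcomp Ydata]; by rewrite E.
  cbn [fst snd csrc ccomp tcomp Ydata] in E; cbn [fst snd csrc ccomp tcomp Ydata]; by rewrite E.
Qed.

Definition Y : vdc := Vdc Yis_vdc.

Section MkF.
Variable B : vdc.
Variables (ob : vob B -> bool) (lo : vlo B -> bool).
Definition mfl (p : vlo B) : Ylo := ((ob (ldom p), ob (lcod p)), lo p).

Lemma lpath_mfl x s y : lpath x s y -> ispath (ob x) (map mfl s) /\ pend (ob x) (map mfl s) = ob y.
Proof.
elim: s x => [|p s IH] x /=; first by move=> ->.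
move=> [<- H]; have [H1 H2] := IH _ H.
by rewrite /mfl /= eqxx.
Qed.

Definition mfc (c : vce B) : vce Y.
  exists ((ob (tdom (cleft c)), map mfl (csrc c)), mfl (ctgt c)).
  by have [H _] := lpath_mfl (cell_src (vdc_axioms B) c).
Defined.

Lemma mkF_vdf : is_vdf (A:=B) (B:=Y) ob (fun h => (ob (tdom h), ob (tcod h))) mfl mfc.
Proof.
have ax := vdc_axioms B.
split.
- by [].
- by [].
- by move=> x; rewrite (tid_dom ax) (tid_cod ax).
- by move=> f g H; rewrite (tcomp_dom ax H) (tcomp_cod ax H).
- by [].
- by [].
- by move=> c; rewrite /cleft /= (cell_left ax).
- move=> c; rewrite /cright /=.
  have [_ ->] := lpath_mfl (cell_src ax c).
  by rewrite (cell_right ax).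
- by [].
- by [].
- move=> p; apply: val_inj => /=.
  by rewrite (cid_src ax) (cid_tgt ax) (cid_left ax) (tid_dom ax).
- move=> a kb Hc; apply: val_inj.
  rewrite Yccomp_val'.
    rewrite /= (ccomp_src ax Hc) (ccomp_tgt ax Hc) (ccomp_left ax Hc) /comp_left.
    have [_ Hk _] := Hc; rewrite (tcomp_dom ax Hk) map_flatten -!map_comp.
    by [].
  have := valP (mfc (ccomp a kb)).
  rewrite /= (ccomp_src ax Hc) (ccomp_left ax Hc) /comp_left.
  have [_ Hk _] := Hc; rewrite (tcomp_dom ax Hk) map_flatten -!map_comp.
  by [].
Qed.

Definition mkF : vdf B Y := Vdf mkF_vdf.
End MkF.

Section Main.
Variables (A B : vdc) (i : vdf A B).
Hypotheses (ff : fully_faithful i) (io : injective (fo i)) (il : injective (fl i)).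
Let ai := vdf_axioms i.
Let axA := vdc_axioms A.

Lemma ft_inj : injective (ft i).
Proof.
move=> f g E; have [faith _ _ _] := ff; apply: faith => //.
  by apply: io; rewrite -!(ft_dom ai) E.
by apply: io; rewrite -!(ft_cod ai) E.
Qed.

Lemma fc_inj : injective (fc i).
Proof.
move=> c c' E; have [_ _ cinj _] := ff.
have Es : csrc c' = csrc c.
  by apply: (inj_map il); rewrite -!(fc_src ai) E.
have Et : ctgt c' = ctgt c.
  by apply: il; rewrite -!(fc_tgt ai) E.
have El : tdom (cleft c') = tdom (cleft c).
  by apply: io; rewrite -!(ft_dom ai) -!(fc_left ai) E.
apply: (cinj (tdom (cleft c)) (csrc c) (ctgt c)) => //.
by exists (tdom (cright c)); exact: (cell_src axA c).
Qed.

Definition asb (P : Prop) : bool := if excluded_middle_informative P then true else false.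
Lemma asbP (P : Prop) : asb P = true <-> P.
Proof. by rewrite /asb; case: excluded_middle_informative. Qed.

Definition f1 : vdf B Y := mkF (fun _ => true) (fun _ => true).
Definition f2 : vdf B Y :=
  mkF (fun y => asb (exists a, fo i a = y)) (fun p => asb (exists a, fl i a = p)).

Lemma asb_o a : asb (exists a', fo i a' = fo i a) = true.
Proof. by apply/asbP; exists a. Qed.
Lemma asb_l a : asb (exists a', fl i a' = fl i a) = true.
Proof. by apply/asbP; exists a. Qed.

Lemma f12 : comp_eq i f1 i f2.
Proof.
split.
- by move=> x /=; rewrite asb_o.
- by move=> f /=; rewrite (ft_dom ai) (ft_cod ai) !asb_o.
- by move=> p /=; rewrite /mfl (fl_dom ai) (fl_cod ai) !asb_o asb_l.
- move=> c; apply: val_inj => /=.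
  rewrite (fc_src ai) (fc_tgt ai) (fc_left ai) (ft_dom ai) asb_o -!map_comp.
  congr (_, _, _).
    by apply: eq_map => p /=; rewrite /mfl (fl_dom ai) (fl_cod ai) !asb_o asb_l.
  by rewrite /mfl (fl_dom ai) (fl_cod ai) !asb_o asb_l.
Qed.

Section Lift.
Variables (X : vdc) (f : vdf X B).
Hypothesis hx : forall x, exists a, fo i a = fo f x.
Hypothesis hl : forall p, exists a, fl i a = fl f p.
Let af := vdf_axioms f.
Let axX := vdc_axioms X.

Definition go x := proj1_sig (constructive_indefinite_description _ (hx x)).
Lemma goP x : fo i (go x) = fo f x.
Proof. exact: proj2_sig (constructive_indefinite_description _ (hx x)). Qed.
Definition gl p := proj1_sig (constructive_indefinite_description _ (hl p)).
Lemma glP p : fl i (gl p) = fl f p.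
Proof. exact: proj2_sig (constructive_indefinite_description _ (hl p)). Qed.

Lemma ht h : exists a, ft i a = ft f h.
Proof.
have [_ full _ _] := ff.
have H1 : tdom (ft f h) = fo i (go (tdom h)) by rewrite (ft_dom af) goP.
have H2 : tcod (ft f h) = fo i (go (tcod h)) by rewrite (ft_cod af) goP.
have [a [_ _ E]] := full _ _ _ H1 H2.
by exists a.
Qed.
Definition gt h := proj1_sig (constructive_indefinite_description _ (ht h)).
Lemma gtP h : ft i (gt h) = ft f h.
Proof. exact: proj2_sig (constructive_indefinite_description _ (ht h)). Qed.

Lemma gt_dom h : tdom (gt h) = go (tdom h).
Proof. by apply: io; rewrite -(ft_dom ai) gtP goP (ft_dom af). Qed.
Lemma gt_cod h : tcod (gt h) = go (tcod h).
Proof. by apply: io; rewrite -(ft_cod ai) gtP goP (ft_cod af). Qed.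
Lemma gl_dom p : ldom (gl p) = go (ldom p).
Proof. by apply: io; rewrite -(fl_dom ai) glP goP (fl_dom af). Qed.
Lemma gl_cod p : lcod (gl p) = go (lcod p).
Proof. by apply: io; rewrite -(fl_cod ai) glP goP (fl_cod af). Qed.

Lemma lpath_g x s y : lpath x s y -> lpath (go x) (map gl s) (go y).
Proof.
elim: s x => [|p s IH] x /=; first by move=> ->.
by move=> [<- H]; rewrite gl_dom gl_cod; split => //; apply: IH.
Qed.

Lemma hc c : exists a, fc i a = fc f c.
Proof.
have [_ _ _ surj] := ff.
have H1 : is_lpath (go (tdom (cleft c))) (map gl (csrc c)).
  by exists (go (tdom (cright c))); apply: lpath_g; exact: (cell_src axX c).
have H2 : tdom (cleft (fc f c)) = fo i (go (tdom (cleft c))).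
  by rewrite (fc_left af) (ft_dom af) goP.
have H3 : csrc (fc f c) = map (fl i) (map gl (csrc c)).
  by rewrite (fc_src af) -map_comp; apply: eq_map => p /=; rewrite glP.
have H4 : ctgt (fc f c) = fl i (gl (ctgt c)) by rewrite (fc_tgt af) glP.
have [a [_ _ _ E]] := surj _ _ _ _ H1 H2 H3 H4.
by exists a.
Qed.
Definition gc c := proj1_sig (constructive_indefinite_description _ (hc c)).
Lemma gcP c : fc i (gc c) = fc f c.
Proof. exact: proj2_sig (constructive_indefinite_description _ (hc c)). Qed.

Lemma gc_left c : cleft (gc c) = gt (cleft c).
Proof. by apply: ft_inj; rewrite -(fc_left ai) gcP gtP (fc_left af). Qed.
Lemma gc_right c : cright (gc c) = gt (cright c).
Proof. by apply: ft_inj; rewrite -(fc_right ai) gcP gtP (fc_right af). Qed.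
Lemma gc_src c : csrc (gc c) = map gl (csrc c).
Proof.
apply: (inj_map il); rewrite -(fc_src ai) gcP (fc_src af) -map_comp.
by apply: eq_map => p /=; rewrite glP.
Qed.
Lemma gc_tgt c : ctgt (gc c) = gl (ctgt c).
Proof. by apply: il; rewrite -(fc_tgt ai) gcP glP (fc_tgt af). Qed.

Lemma cadj_g bs : cadj bs -> cadj (map gc bs).
Proof.
elim: bs => [|b bs IH] //=; case: bs IH => [|b2 bs] //= IH [E H].
by split; [rewrite gc_left gc_right E | exact: IH].
Qed.

Lemma g_vdf : is_vdf go gt gl gc.
Proof.
split.
- exact: gt_dom.
- exact: gt_cod.
- by move=> x; apply: ft_inj; rewrite gtP (ft_id af) (ft_id ai) goP.
- move=> h k E; apply: ft_inj.
  have E' : tcod (gt h) = tdom (gt k) by rewrite gt_dom gt_cod E.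
  by rewrite (ft_comp ai E') !gtP (ft_comp af E).
- exact: gl_dom.
- exact: gl_cod.
- exact: gc_left.
- exact: gc_right.
- exact: gc_src.
- exact: gc_tgt.
- by move=> p; apply: fc_inj; rewrite gcP (fc_id af) (fc_id ai) glP.
- move=> a [k bs] Hc; apply: fc_inj.
  have Hc' : composable (gc a) (gt k, map gc bs).
    case: Hc => [[Hh Ha] Hk Hs]; rewrite /= in Hh Hk Hs; split.
    + split; last exact: cadj_g.
      by move: Hh; case: (bs) => [|b bs'] //= <-; rewrite gc_left.
    + by rewrite /= gt_cod gc_left gt_dom Hk.
    + by rewrite /= gc_src -Hs -!map_comp; apply: eq_map => b /=; rewrite gc_tgt.
  rewrite gcP (fc_comp af Hc) (fc_comp ai Hc') /= gcP gtP -map_comp.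
  by congr (ccomp _ (_, _)); apply: eq_map => b /=; rewrite gcP.
Qed.

Definition gF : vdf X A := Vdf g_vdf.
End Lift.
End Main.

Theorem lemma5p16 (A B : vdc) (i : vdf A B) :
  fully_faithful i -> injective (fo i) -> injective (fl i) ->
  forall (P : vdc) (q1 q2 : vdf B P),
    is_cokernel_pair i q1 q2 -> is_equalizer i q1 q2.
Proof.
move=> ff io il P q1 q2 [Hq Hu]; split => // X f Hf.
have [[u [Hu1 Hu2]] _] := Hu Y (f1 B) (f2 i) (f12 i).
case: Hf => Hfo Hft Hfl Hfc.
case: Hu1 => H1o H1t H1l H1c; case: Hu2 => H2o H2t H2l H2c.
have hx : forall x, exists a, fo i a = fo f x.
  move=> x; apply/asbP.
  by have := H2o (fo f x); rewrite -Hfo H1o /= => <-.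
have hl : forall p, exists a, fl i a = fl f p.
  move=> p; apply/asbP.
  by have := H2l (fl f p); rewrite -Hfl H1l /= => /(congr1 snd) /= <-.
split.
  exists (gF ff io il hx hl); split.
  - exact: goP.
  - exact: gtP.
  - exact: glP.
  - exact: gcP.
move=> g h [Go Gt Gl Gc] [Ho Ht Hl Hc]; split.
- by move=> x; apply: io; rewrite Go Ho.
- by move=> x; apply: (ft_inj ff io); rewrite Gt Ht.
- by move=> x; apply: il; rewrite Gl Hl.
- by move=> x; apply: (fc_inj ff io il); rewrite Gc Hc.
Qed.
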